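(* Let $B>0$ be arbitrary, let $c>0$, and let $\epsilon^*(B)=\dfrac{c\,e^{-c/2}}{1+B}$. Let $\beta$ be Lipschitz on $[0,1]$ with $\|\beta\|_\infty\le B$, write $\bar\beta=\|\beta\|_\infty$, let $k=\mathcal{K}(\beta)$ be the exact backstepping kernel, and let $\hat k$ (a neural operator approximation $\hat{\mathcal K}(\beta)$) satisfy $|k(x)-\hat k(x)|<\epsilon$ for all $x\in[0,1]$ with $\epsilon\in(0,\epsilon^* )$. Then solutions of the closed-loop system $$u_t(x,t)=u_x(x,t)+\beta(x)u(0,t),\quad x\in[0,1],\qquad u(1,t)=\int_0^1\hat k(1-y)u(y,t)\,dy$$ satisfy $$\|u(t)\|\le M e^{-c^*t/2}\|u(0)\|\quad\forall t\ge0,$$ with $c^*=c-\frac{e^c}{c}\epsilon^2(1+B)^2>0$ and $$M=\Big(1+\big(\bar\beta+(1+\bar\beta)\epsilon\big)e^{(1+\bar\beta)\epsilon}\Big)\big(1+\bar\beta e^{\bar\beta}\big)e^{c/2}.$$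
   Context: The backstepping kernel operator $\mathcal{K}$ maps $\beta\in C^0[0,1]$ to the solution $k$ of $k(x)=-\beta(x)+\int_0^x\beta(x-y)k(y)\,dy$, $x\in[0,1]$. $\|\cdot\|_\infty$ is the supremum norm on $[0,1]$ and $\|u(t)\|$ is the $L^2[0,1]$ norm of $u(\cdot,t)$. *)

(* Defs.v *)
From Stdlib Require Import Reals.
From Coquelicot Require Import Coquelicot.
Open Scope R_scope.

Definition L2norm (f : R -> R) : R := sqrt (RInt (fun x => f x ^ 2) 0 1).

Definition lipschitz_on01 (beta : R -> R) : Prop :=
  exists L : R, forall x y, 0 <= x <= 1 -> 0 <= y <= 1 ->
    Rabs (beta x - beta y) <= L * Rabs (x - y).

Definition is_supnorm01 (f : R -> R) (s : R) : Prop :=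
  (forall x, 0 <= x <= 1 -> Rabs (f x) <= s) /\
  (forall b, (forall x, 0 <= x <= 1 -> Rabs (f x) <= b) -> s <= b).

(* k = K(beta): k is the continuous solution on [0,1] of
   k(x) = -beta(x) + int_0^x beta(x-y) k(y) dy (unique, so this determines k on [0,1]). *)
Definition is_backstepping_kernel (beta k : R -> R) : Prop :=
  (forall x, 0 <= x <= 1 -> continuous k x) /\
  (forall x, 0 <= x <= 1 ->
     k x = - beta x + RInt (fun y => beta (x - y) * k y) 0 x).

Definition is_closed_loop_solution (beta khat : R -> R) (u : R -> R -> R) : Prop :=
  (forall x t, 0 <= x <= 1 -> 0 <= t ->
     continuous (fun p : R * R => u (fst p) (snd p)) (x, t)) /\
  (forall x t, 0 < x < 1 -> 0 < t ->
     ex_derive (fun y => u y t) x /\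
     ex_derive (fun s => u x s) t /\
     continuous (fun p : R * R => Derive (fun y => u y (snd p)) (fst p)) (x, t) /\
     continuous (fun p : R * R => Derive (fun s => u (fst p) s) (snd p)) (x, t) /\
     Derive (fun s => u x s) t = Derive (fun y => u y t) x + beta x * u 0 t) /\
  (forall t, 0 <= t -> u 1 t = RInt (fun y => khat (1 - y) * u y t) 0 1).

(* Main.v *)
Require Import Defs.
From Stdlib Require Import Reals.
From Coquelicot Require Import Coquelicot.
Open Scope R_scope.
From Stdlib Require Import Lra.

Lemma lip_continuous (f : R -> R) (L x : R) :
  (forall y, Rabs (f y - f x) <= L * Rabs (y - x)) -> continuous f x.
Proof.
  intros H. apply continuity_pt_filterlim.
  intros eps Heps.
  exists (eps / (Rabs L + 1)). split.
  { apply Rdiv_lt_0_compat; [lra| pose proof (Rabs_pos L); lra]. }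
  intros y [_ Hy]. simpl in Hy. unfold R_dist in *.
  eapply Rle_lt_trans. apply H.
  pose proof (Rabs_pos L). pose proof (Rabs_pos (y - x)).
  apply Rle_lt_trans with (Rabs L * Rabs (y - x)).
  apply Rmult_le_compat_r; [lra| apply Rle_abs].
  apply Rle_lt_trans with ((Rabs L + 1) * Rabs (y - x)). nra.
  apply Rmult_lt_reg_l with (/ (Rabs L + 1)).
  apply Rinv_0_lt_compat; lra.
  rewrite <- Rmult_assoc, Rinv_l by lra. unfold Rdiv in Hy. lra.
Qed.

Definition clamp01 (x : R) : R := Rmax 0 (Rmin 1 x).

Lemma clamp01_in x : 0 <= clamp01 x <= 1.
Proof. unfold clamp01, Rmax, Rmin. repeat destruct Rle_dec; lra. Qed.

Lemma clamp01_id x : 0 <= x <= 1 -> clamp01 x = x.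
Proof. intros. unfold clamp01, Rmax, Rmin. repeat destruct Rle_dec; lra. Qed.

Lemma clamp01_lip x y : Rabs (clamp01 y - clamp01 x) <= 1 * Rabs (y - x).
Proof.
  rewrite Rmult_1_l. unfold clamp01, Rmax, Rmin.
  repeat destruct Rle_dec; unfold Rabs; repeat destruct Rcase_abs; lra.
Qed.

Lemma clamp01_cont x : continuous clamp01 x.
Proof. apply lip_continuous with 1. intros; apply clamp01_lip. Qed.

Lemma rmax0_cont x : continuous (fun t => Rmax 0 t) x.
Proof.
  apply lip_continuous with 1. intros y. rewrite Rmult_1_l.
  unfold Rmax. repeat destruct Rle_dec; unfold Rabs; repeat destruct Rcase_abs; lra.
Qed.

Lemma cont_clamp_comp (k : R -> R) :
  (forall x, 0 <= x <= 1 -> continuous k x) ->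
  forall x, continuous (fun y => k (clamp01 y)) x.
Proof.
  intros Hk x. apply continuous_comp. apply clamp01_cont. apply Hk, clamp01_in.
Qed.

Lemma lip_clamp_cont (beta : R -> R) :
  lipschitz_on01 beta -> forall x, continuous (fun y => beta (clamp01 y)) x.
Proof.
  intros [L HL] x. apply lip_continuous with (Rabs L). intros y.
  eapply Rle_trans. apply HL; apply clamp01_in.
  apply Rle_trans with (Rabs L * Rabs (clamp01 y - clamp01 x)).
  apply Rmult_le_compat_r. apply Rabs_pos. apply Rle_abs.
  apply Rmult_le_compat_l. apply Rabs_pos.
  pose proof (clamp01_lip x y). lra.
Qed.

Lemma diff_partials (f : R -> R -> R) x y :
  locally_2d (fun u v => ex_derive (fun z => f z v) u) x y ->
  ex_derive (fun z => f x z) y ->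
  continuity_2d_pt (fun u v => Derive (fun z => f z v) u) x y ->
  differentiable_pt_lim f x y (Derive (fun z => f z y) x) (Derive (fun z => f x z) y).
Proof.
  intros [d1 H1] Hy Hc eps.
  destruct (Hc (pos_div_2 eps)) as [d2 H2].
  destruct Hy as [ly Hly].
  rewrite (is_derive_unique (fun z : R => f x z) y ly Hly).
  apply is_derive_Reals in Hly.
  destruct (Hly (eps/2)) as [d3 H3]. { destruct eps; simpl; lra. }
  assert (Hd : 0 < Rmin d1 (Rmin d2 d3)).
  { destruct d1, d2, d3; simpl. repeat apply Rmin_pos; auto. }
  exists (mkposreal _ Hd). simpl. intros u v Hu Hv.
  assert (Hu1 : Rabs (u - x) < d1) by (eapply Rlt_le_trans; [exact Hu| apply Rmin_l]).
  assert (Hv1 : Rabs (v - y) < d1) by (eapply Rlt_le_trans; [exact Hv| apply Rmin_l]).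
  assert (Hu2 : Rabs (u - x) < d2).
  { eapply Rlt_le_trans; [exact Hu|]. eapply Rle_trans; [apply Rmin_r| apply Rmin_l]. }
  assert (Hv2 : Rabs (v - y) < d2).
  { eapply Rlt_le_trans; [exact Hv|]. eapply Rle_trans; [apply Rmin_r| apply Rmin_l]. }
  assert (Hv3 : Rabs (v - y) < d3).
  { eapply Rlt_le_trans; [exact Hv|]. eapply Rle_trans; [apply Rmin_r| apply Rmin_r]. }
  set (lx := Derive (fun z => f z y) x).
  assert (S2 : Rabs (f x v - f x y - ly * (v - y)) <= eps / 2 * Rabs (v - y)).
  { destruct (Req_dec v y) as [->|Hne].
    - replace (f x y - f x y - ly * (y - y)) with 0 by ring.
      rewrite Rabs_R0, Rminus_diag, Rabs_R0. lra.
    - assert (Hh : v - y <> 0) by lra.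
      specialize (H3 (v - y) Hh Hv3).
      replace (y + (v - y)) with v in H3 by ring.
      replace (f x v - f x y - ly * (v - y)) with (((f x v - f x y) / (v - y) - ly) * (v - y))
        by (field; auto).
      rewrite Rabs_mult. apply Rmult_le_compat_r. apply Rabs_pos. lra. }
  assert (S1 : Rabs (f u v - f x v - lx * (u - x)) <= eps / 2 * Rabs (u - x)).
  { destruct (Req_dec u x) as [->|Hne].
    - replace (f x v - f x v - lx * (x - x)) with 0 by ring.
      rewrite Rabs_R0, Rminus_diag, Rabs_R0. lra.
    - destruct (MVT_gen (fun z => f z v) x u (fun z => Derive (fun z => f z v) z)) as [c [Hc1 Hc2]].
      + intros z Hz. apply Derive_correct. apply H1; [|exact Hv1].
        apply Rle_lt_trans with (Rabs (u - x)); [|exact Hu1].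
        unfold Rmin, Rmax in Hz; destruct Rle_dec in Hz; unfold Rabs; repeat destruct Rcase_abs; lra.
      + intros z Hz. apply continuity_pt_filterlim.
        refine (ex_derive_continuous (K:=R_AbsRing) (fun z0 : R => f z0 v) z _).
        apply H1; [|exact Hv1].
        apply Rle_lt_trans with (Rabs (u - x)); [|exact Hu1].
        unfold Rmin, Rmax in Hz; destruct Rle_dec in Hz; unfold Rabs; repeat destruct Rcase_abs; lra.
      + simpl in Hc2. rewrite Hc2.
        assert (Hcx : Rabs (c - x) < d2).
        { apply Rle_lt_trans with (Rabs (u - x)); [|exact Hu2].
          unfold Rmin, Rmax in Hc1; destruct Rle_dec in Hc1; unfold Rabs; repeat destruct Rcase_abs; lra. }
        specialize (H2 c v Hcx Hv2). simpl in H2.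
        replace (Derive (fun z : R => f z v) c * (u - x) - lx * (u - x))
          with ((Derive (fun z : R => f z v) c - lx) * (u - x)) by ring.
        rewrite Rabs_mult. apply Rmult_le_compat_r. apply Rabs_pos. unfold lx. lra. }
  replace (f u v - f x y - (lx * (u - x) + ly * (v - y)))
    with ((f u v - f x v - lx * (u - x)) + (f x v - f x y - ly * (v - y))) by ring.
  eapply Rle_trans. apply Rabs_triang.
  assert (Rabs (u - x) <= Rmax (Rabs (u - x)) (Rabs (v - y))) by apply Rmax_l.
  assert (Rabs (v - y) <= Rmax (Rabs (u - x)) (Rabs (v - y))) by apply Rmax_r.
  destruct eps as [e He]; simpl in *. nra.
Qed.

Lemma cont_aff (a b x : R) : continuous (fun s => a + b * s) x.
Proof.
  apply lip_continuous with (Rabs b). intros y.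
  replace (a + b * y - (a + b * x)) with (b * (y - x)) by ring.
  rewrite Rabs_mult. lra.
Qed.

Lemma cont_ext (f g : R -> R) x : (forall y, f y = g y) -> continuous f x -> continuous g x.
Proof.
  intros H Hf. apply continuity_pt_filterlim. apply continuity_pt_filterlim in Hf.
  eapply continuity_pt_ext; eauto.
Qed.

Lemma cont_everywhere_RInt (g : R -> R) :
  (forall x, continuous g x) -> forall a b, ex_RInt g a b.
Proof. intros Hg a b. apply (ex_RInt_continuous (V:=R_CompleteNormedModule)). intros; apply Hg. Qed.

Lemma derive_RInt0 (g : R -> R) (a s : R) :
  (forall x, continuous g x) -> is_derive (fun b => RInt g a b) s (g s).
Proof.
  intros Hg. apply is_derive_RInt with a.
  - apply filter_forall. intros b. apply RInt_correct. apply cont_everywhere_RInt; auto.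
  - apply Hg.
Qed.

Lemma cont_RInt0 (g : R -> R) (a s : R) :
  (forall x, continuous g x) -> continuous (fun b => RInt g a b) s.
Proof.
  intros Hg. apply (ex_derive_continuous (K:=R_AbsRing) (fun b => RInt g a b)).
  eexists. apply derive_RInt0; auto.
Qed.

Lemma ae_cont (u : R -> R -> R) :
  (forall x t, 0 <= x <= 1 -> 0 <= t -> continuous (fun p : R * R => u (fst p) (snd p)) (x, t)) ->
  forall t, continuous (fun t => u 0 (Rmax 0 t)) t.
Proof.
  intros Hu t.
  apply (continuous_comp_2 (fun _ : R => 0) (fun t => Rmax 0 t) u).
  apply continuous_const. apply rmax0_cont.
  apply Hu. lra. apply Rmax_l.
Qed.

Lemma charac (beta khat : R -> R) (u : R -> R -> R) (be : R -> R) :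
  is_closed_loop_solution beta khat u ->
  (forall x, continuous be x) -> (forall x, 0 <= x <= 1 -> be x = beta x) ->
  forall x0 t0, 0 <= x0 <= 1 -> 0 <= t0 ->
  u x0 t0 = u 0 (t0 + x0) - RInt (fun r => be (x0 - r) * u 0 (Rmax 0 (t0 + r))) 0 x0.
Proof.
  intros [Hc [Hpde Hbc]] Hbe Hbeq x0 t0 Hx0 Ht0.
  set (g := fun r => be (x0 - r) * u 0 (Rmax 0 (t0 + r))).
  assert (Hg : forall r, continuous g r).
  { intros r. unfold g. apply (continuous_mult (fun r => be (x0 - r)) (fun r => u 0 (Rmax 0 (t0 + r)))).
    - apply continuous_comp. apply (cont_ext (fun s => x0 + (-1) * s)). intros; ring. apply cont_aff.
      apply Hbe.
    - apply continuous_comp with (f := fun r => t0 + r) (g := fun t => u 0 (Rmax 0 t)).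
      apply (cont_ext (fun s => t0 + 1 * s)). intros; ring. apply cont_aff.
      apply ae_cont; auto. }
  set (psi := fun s => u (x0 - s) (t0 + s) - RInt g 0 s).
  destruct (Req_dec x0 0) as [E0|Hne].
  { subst x0. rewrite RInt_point. unfold zero; simpl. rewrite Rplus_0_r. ring_simplify.
    replace (0 - 0) with 0 by ring. reflexivity. }
  destruct (MVT_gen psi 0 x0 (fun _ => 0)) as [c [Hc1 Hc2]].
  - intros s Hs. rewrite Rmin_left in Hs by lra. rewrite Rmax_right in Hs by lra.
    set (x := x0 - s). set (t := t0 + s).
    assert (Hx : 0 < x < 1) by (unfold x; lra).
    assert (Ht : 0 < t) by (unfold t; lra).
    destruct (Hpde x t Hx Ht) as [Hdx [Hdt [Hcx [Hct Heq]]]].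
    assert (Hdiff : differentiable_pt_lim u x t (Derive (fun z => u z t) x) (Derive (fun z => u x z) t)).
    { apply diff_partials.
      - assert (Hd : 0 < Rmin x (Rmin (1 - x) t)) by (repeat apply Rmin_pos; lra).
        exists (mkposreal _ Hd). simpl. intros p q Hp Hq.
        assert (Rabs (p - x) < x) by (eapply Rlt_le_trans; [exact Hp| apply Rmin_l]).
        assert (Rabs (p - x) < 1 - x) by (eapply Rlt_le_trans; [exact Hp| eapply Rle_trans; [apply Rmin_r| apply Rmin_l]]).
        assert (Rabs (q - t) < t) by (eapply Rlt_le_trans; [exact Hq| eapply Rle_trans; [apply Rmin_r| apply Rmin_r]]).
        assert (0 < p < 1 /\ 0 < q) as [Hp' Hq'].
        { unfold Rabs in *; repeat destruct Rcase_abs; lra. }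
        apply (Hpde p q Hp' Hq').
      - exact Hdt.
      - apply continuity_2d_pt_filterlim. exact Hcx. }
    assert (Hcomp := derivable_pt_lim_comp_2d u (fun s => x0 - s) (fun s => t0 + s) s _ _ (-1) 1 Hdiff).
    assert (Hd1 : derivable_pt_lim (fun s => x0 - s) s (-1)).
    { apply is_derive_Reals. auto_derive; auto; ring. }
    assert (Hd2 : derivable_pt_lim (fun s => t0 + s) s 1).
    { apply is_derive_Reals. auto_derive; auto; ring. }
    specialize (Hcomp Hd1 Hd2).
    apply is_derive_Reals in Hcomp.
    assert (HI := derive_RInt0 g 0 s Hg).
    assert (HD : is_derive psi s (minus (Derive (fun z : R => u z t) x * -1 + Derive (fun z : R => u x z) t * 1) (g s))).
    { apply (is_derive_minus (fun s => u (x0 - s) (t0 + s)) (fun s => RInt g 0 s)); auto. }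
    assert (E : minus (Derive (fun z : R => u z t) x * -1 + Derive (fun z : R => u x z) t * 1) (g s) = 0).
    { unfold minus, plus, opp; simpl. unfold g. rewrite Heq.
      rewrite Hbeq by (unfold x in *; lra). fold x. fold t.
      rewrite Rmax_right by lra. ring. }
    rewrite E in HD. exact HD.
  - intros s Hs. rewrite Rmin_left in Hs by lra. rewrite Rmax_right in Hs by lra.
    apply continuity_pt_filterlim. unfold psi.
    apply (continuous_minus (fun s => u (x0 - s) (t0 + s)) (fun s => RInt g 0 s)).
    + apply (continuous_comp_2 (fun s => x0 - s) (fun s => t0 + s) u).
      apply (cont_ext (fun s => x0 + (-1) * s)). intros; ring. apply cont_aff.
      apply (cont_ext (fun s => t0 + 1 * s)). intros; ring. apply cont_aff.
      apply Hc; lra.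
    + apply cont_RInt0; auto.
  - unfold psi in Hc2. rewrite RInt_point in Hc2. unfold zero in Hc2; simpl in Hc2.
    replace (x0 - x0) with 0 in Hc2 by ring. replace (x0 - 0) with x0 in Hc2 by ring.
    rewrite Rplus_0_r in Hc2. fold g. lra.
Qed.

Lemma abs_RInt_le_const' (f : R -> R) (a b M : R) :
  ex_RInt f a b ->
  (forall t, Rmin a b <= t <= Rmax a b -> Rabs (f t) <= M) ->
  Rabs (RInt f a b) <= Rabs (b - a) * M.
Proof.
  intros Hex H. destruct (Rle_dec a b) as [Hab|Hab].
  - rewrite (Rabs_right (b - a)) by lra. apply abs_RInt_le_const; auto.
    intros t Ht. apply H. rewrite Rmin_left, Rmax_right; lra.
  - rewrite <- opp_RInt_swap by (apply ex_RInt_swap; auto). unfold opp; simpl. rewrite Rabs_Ropp.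
    rewrite (Rabs_left (b - a)) by lra. replace (- (b - a)) with (a - b) by ring.
    apply abs_RInt_le_const. lra. apply ex_RInt_swap; auto.
    intros t Ht. apply H. rewrite Rmin_right, Rmax_left; lra.
Qed.

Lemma cont2d_1 (h : R -> R -> R) y p : continuity_2d_pt h y p -> continuous (fun y => h y p) y.
Proof.
  intros H. apply continuity_2d_pt_filterlim in H.
  apply (continuous_comp_2 (fun y => y) (fun _ => p) h). apply continuous_id. apply continuous_const.
  exact H.
Qed.

Lemma cont2d_2 (h : R -> R -> R) y p : continuity_2d_pt h y p -> continuous (fun p => h y p) p.
Proof.
  intros H. apply continuity_2d_pt_filterlim in H.
  apply (continuous_comp_2 (fun _ => y) (fun p => p) h). apply continuous_const. apply continuous_id.
  exact H.
Qed.

Lemma JC (h : R -> R -> R) : (forall y p, continuity_2d_pt h y p) ->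
  forall s0 p0, continuity_2d_pt (fun s p => RInt (fun y => h y p) 0 s) s0 p0.
Proof.
  intros Hh s0 p0 eps.
  destruct (Hh s0 p0 (mkposreal 1 Rlt_0_1)) as [d1 H1]. simpl in H1.
  set (Mb := Rabs (h s0 p0) + 1).
  assert (HMb : 0 < Mb) by (unfold Mb; pose proof (Rabs_pos (h s0 p0)); lra).
  assert (He' : 0 < eps / (2 * (Rabs s0 + 1))).
  { destruct eps; simpl. apply Rdiv_lt_0_compat; auto. pose proof (Rabs_pos s0); lra. }
  destruct (uniform_continuity_2d_1d h (Rmin 0 s0) (Rmax 0 s0) p0 (fun x _ => Hh x p0) (mkposreal _ He')) as [d2 H2].
  simpl in H2.
  assert (He2 : 0 < eps / (2 * Mb)).
  { destruct eps; simpl. apply Rdiv_lt_0_compat; auto. lra. }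
  assert (Hd : 0 < Rmin d1 (Rmin d2 (eps / (2 * Mb)))).
  { destruct d1, d2; simpl. repeat apply Rmin_pos; auto. }
  exists (mkposreal _ Hd). simpl. intros s p Hs Hp.
  assert (Hs1 : Rabs (s - s0) < d1) by (eapply Rlt_le_trans; [exact Hs| apply Rmin_l]).
  assert (Hp1 : Rabs (p - p0) < d1) by (eapply Rlt_le_trans; [exact Hp| apply Rmin_l]).
  assert (Hp2 : Rabs (p - p0) < d2).
  { eapply Rlt_le_trans; [exact Hp|]. eapply Rle_trans; [apply Rmin_r| apply Rmin_l]. }
  assert (Hs3 : Rabs (s - s0) < eps / (2 * Mb)).
  { eapply Rlt_le_trans; [exact Hs|]. eapply Rle_trans; [apply Rmin_r| apply Rmin_r]. }
  assert (Hex : forall q a b, ex_RInt (fun y => h y q) a b).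
  { intros q a b. apply (ex_RInt_continuous (V:=R_CompleteNormedModule)). intros z _.
    apply cont2d_1. apply Hh. }
  rewrite <- (RInt_Chasles (fun y => h y p) 0 s0 s) by auto.
  unfold plus; simpl.
  replace (RInt (fun y : R => h y p) 0 s0 + RInt (fun y : R => h y p) s0 s -
     RInt (fun y : R => h y p0) 0 s0)
    with (RInt (fun y : R => h y p) s0 s + RInt (fun y => h y p - h y p0) 0 s0).
  2: { rewrite (RInt_minus (fun y => h y p) (fun y => h y p0)) by auto. unfold minus, plus, opp; simpl. ring. }
  eapply Rle_lt_trans. apply Rabs_triang.
  assert (A1 : Rabs (RInt (fun y : R => h y p) s0 s) <= Rabs (s - s0) * Mb).
  { apply abs_RInt_le_const'. auto. intros t Ht.
    assert (Rabs (t - s0) < d1).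
    { apply Rle_lt_trans with (Rabs (s - s0)); auto.
      unfold Rmin, Rmax in Ht; destruct Rle_dec in Ht; unfold Rabs; repeat destruct Rcase_abs; lra. }
    specialize (H1 t p H Hp1). unfold Mb.
    pose proof (Rabs_triang_inv (h t p) (h s0 p0)). lra. }
  assert (A2 : Rabs (RInt (fun y => h y p - h y p0) 0 s0) <= Rabs (s0 - 0) * (eps / (2 * (Rabs s0 + 1)))).
  { apply abs_RInt_le_const'.
    apply (ex_RInt_minus (V:=R_NormedModule) (fun y => h y p) (fun y => h y p0)); auto.
    intros t Ht. left. apply H2; auto.
    - destruct d2; simpl; lra.
    - apply Rabs_lt_between' in Hp2. lra.
    - rewrite Rminus_diag, Rabs_R0. destruct d2; simpl; lra. }
  rewrite Rminus_0_r in A2.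
  assert (B1 : Rabs (s - s0) * Mb < eps / 2).
  { apply Rlt_le_trans with (eps / (2 * Mb) * Mb).
    apply Rmult_lt_compat_r; auto. right; field; lra. }
  assert (B2 : Rabs s0 * (eps / (2 * (Rabs s0 + 1))) <= eps / 2).
  { pose proof (Rabs_pos s0). destruct eps as [e He]; simpl in *.
    apply Rmult_le_reg_r with (2 * (Rabs s0 + 1)). lra.
    field_simplify; try lra. }
  lra.
Qed.

Lemma cont2d_all_of_cont (F : R -> R -> R) :
  (forall s p, continuity_2d_pt F s p) ->
  forall z : R * R, continuous (fun z : R * R => F (fst z) (snd z)) z.
Proof.
  intros H [s p]. apply continuity_2d_pt_filterlim. apply H.
Qed.

Lemma cont2d_diag (Q : R -> R -> R) : (forall s p, continuity_2d_pt Q s p) ->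
  forall X r, continuity_2d_pt (fun _ r => Q r r) X r.
Proof.
  intros HQ X r. apply continuity_2d_pt_filterlim.
  apply (continuous_comp_2 (fun z : R * R => snd z) (fun z : R * R => snd z) Q).
  apply continuous_snd. apply continuous_snd.
  apply continuity_2d_pt_filterlim. apply HQ.
Qed.

Lemma cont_diag (Q : R -> R -> R) : (forall s p, continuity_2d_pt Q s p) ->
  forall y, continuous (fun y => Q y y) y.
Proof.
  intros HQ y. apply (continuous_comp_2 (fun y => y) (fun y => y) Q).
  apply continuous_id. apply continuous_id. apply continuity_2d_pt_filterlim. apply HQ.
Qed.

Lemma fubini_tri (h : R -> R -> R) : (forall y p, continuity_2d_pt h y p) ->
  forall X, RInt (fun y => RInt (fun r => h y r) 0 y) 0 X
          = RInt (fun r => RInt (fun y => h y r) r X) 0 X.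
Proof.
  intros Hh.
  set (Q := fun s p => RInt (fun y => h y p) 0 s).
  assert (HQ : forall s p, continuity_2d_pt Q s p) by (apply JC; auto).
  set (Q' := fun s p => RInt (fun r => h p r) 0 s).
  assert (HQ' : forall s p, continuity_2d_pt Q' s p).
  { apply (JC (fun r y => h y r)). intros y p. 
    apply continuity_2d_pt_filterlim.
    apply (continuous_comp_2 (fun z : R * R => snd z) (fun z : R * R => fst z) h).
    apply continuous_snd. apply continuous_fst.
    apply continuity_2d_pt_filterlim. apply Hh. }
  assert (Hex : forall q a b, ex_RInt (fun y => h y q) a b).
  { intros q a b. apply (ex_RInt_continuous (V:=R_CompleteNormedModule)). intros z _.
    apply cont2d_1. apply Hh. }
  set (f := fun X r => RInt (fun y => h y r) r X).
  assert (Hf : forall X r, f X r = Q X r - Q r r).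
  { intros X r. unfold f, Q. rewrite <- (RInt_Chasles (fun y => h y r) 0 r X) by auto.
    unfold plus; simpl. lra. }
  assert (Hfc : forall X r, continuity_2d_pt f X r).
  { intros X r.
    assert (H2 := cont2d_diag Q HQ X r).
    assert (H1 := continuity_2d_pt_minus Q (fun _ r => Q r r) X r (HQ X r) H2).
    apply (continuity_2d_pt_ext _ _ X r (fun a b => eq_sym (Hf a b)) H1). }
  assert (Hfd : forall X r, is_derive (fun z => f z r) X (h X r)).
  { intros X r. unfold f. apply (derive_RInt0 (fun y => h y r) r X).
    intros; apply cont2d_1, Hh. }
  assert (HfD : forall X r, Derive (fun z => f z r) X = h X r).
  { intros; apply is_derive_unique, Hfd. }
  assert (Hfex : forall X a b, ex_RInt (fun t => f X t) a b).
  { intros X a b. apply (ex_RInt_continuous (V:=R_CompleteNormedModule)). intros z _.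
    apply cont2d_2. apply Hfc. }
  assert (HG : forall X, is_derive (fun X => RInt (fun r => f X r) 0 X) X (RInt (fun r => h X r) 0 X)).
  { intros X.
    assert (Hd := is_derive_RInt_param_bound_comp f (fun _ => 0) (fun X => X) X 0 1).
    simpl in Hd.
    assert (HH : forall x0 t, continuity_2d_pt (fun u v => Derive (fun z => f z v) u) x0 t).
    { intros x0 t. apply continuity_2d_pt_ext with h. intros; symmetry; apply HfD. apply Hh. }
    assert (Hd' : is_derive (fun x0 : R => RInt (fun t : R => f x0 t) 0 x0) X
       (RInt (fun t : R => Derive (fun u : R => f u t) X) 0 X + - f X 0 * 0 + f X X * 1)).
    { apply Hd.
      - apply filter_forall; intros; apply Hfex.
      - exists (mkposreal 1 Rlt_0_1). apply filter_forall; intros; apply Hfex.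
      - exists (mkposreal 1 Rlt_0_1). apply filter_forall; intros; apply Hfex.
      - auto_derive; auto.
      - auto_derive; auto.
      - exists (mkposreal 1 Rlt_0_1). apply filter_forall; intros. eexists. apply Hfd.
      - intros; apply HH.
      - exists (mkposreal 1 Rlt_0_1). intros; apply HH.
      - exists (mkposreal 1 Rlt_0_1). intros; apply HH.
      - apply continuity_pt_filterlim. apply cont2d_2. apply Hfc.
      - apply continuity_pt_filterlim. apply cont2d_2. apply Hfc. }
    assert (fXX : f X X = 0) by (unfold f; rewrite RInt_point; reflexivity).
    rewrite fXX in Hd'.
    replace (RInt (fun r : R => h X r) 0 X) with
      (RInt (fun t : R => Derive (fun u : R => f u t) X) 0 X + - f X 0 * 0 + 0 * 1).
    exact Hd'.
    rewrite (RInt_ext _ (fun r => h X r)). ring. intros; apply HfD. }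
  assert (HF : forall X, is_derive (fun X => RInt (fun y => RInt (fun r => h y r) 0 y) 0 X) X (RInt (fun r => h X r) 0 X)).
  { intros X. apply (derive_RInt0 (fun y => RInt (fun r => h y r) 0 y) 0 X).
    intros y. exact (cont_diag Q' HQ' y). }
  intros X.
  set (Df := fun X => RInt (fun y => RInt (fun r => h y r) 0 y) 0 X - RInt (fun r => f X r) 0 X).
  assert (HDf : forall X, is_derive Df X 0).
  { intros Y.
    assert (HD : is_derive Df Y (minus (RInt (fun r => h Y r) 0 Y) (RInt (fun r => h Y r) 0 Y))).
    { apply (is_derive_minus (fun X => RInt (fun y => RInt (fun r => h y r) 0 y) 0 X) (fun X => RInt (fun r => f X r) 0 X)); auto. }
    rewrite minus_eq_zero in HD. exact HD. }
  destruct (MVT_gen Df 0 X (fun _ => 0)) as [c [_ Hc]].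
  - intros; apply HDf.
  - intros. apply continuity_pt_filterlim. apply (ex_derive_continuous (K:=R_AbsRing) Df). eexists; apply HDf.
  - unfold Df in Hc. rewrite !RInt_point in Hc. unfold zero in Hc; simpl in Hc. unfold f in Hc. lra.
Qed.

Lemma RInt_minus' (f g : R -> R) a b : ex_RInt f a b -> ex_RInt g a b ->
  RInt (fun x => f x - g x) a b = RInt f a b - RInt g a b.
Proof. intros. apply (RInt_minus (V:=R_CompleteNormedModule)); auto. Qed.

Lemma RInt_plus' (f g : R -> R) a b : ex_RInt f a b -> ex_RInt g a b ->
  RInt (fun x => f x + g x) a b = RInt f a b + RInt g a b.
Proof. intros. apply (RInt_plus (V:=R_CompleteNormedModule)); auto. Qed.

Lemma RInt_scal' (f : R -> R) c a b : ex_RInt f a b ->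
  RInt (fun x => c * f x) a b = c * RInt f a b.
Proof. intros. apply (RInt_scal (V:=R_CompleteNormedModule)); auto. Qed.

Lemma cont_mult' (f g : R -> R) x : continuous f x -> continuous g x -> continuous (fun y => f y * g y) x.
Proof. intros. apply (continuous_mult f g); auto. Qed.

Lemma cont_minus' (f g : R -> R) x : continuous f x -> continuous g x -> continuous (fun y => f y - g y) x.
Proof. intros. apply (continuous_minus f g); auto. Qed.

Lemma cont_plus' (f g : R -> R) x : continuous f x -> continuous g x -> continuous (fun y => f y + g y) x.
Proof. intros. apply (continuous_plus f g); auto. Qed.

Lemma cont_shift (f : R -> R) (a b : R) x : (forall y, continuous f y) -> continuous (fun y => f (a + b * y)) x.
Proof. intros Hf. apply continuous_comp. apply cont_aff. apply Hf. Qed.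

Lemma cont2d_of (F : R -> R -> R) :
  (forall z : R * R, continuous (fun z : R * R => F (fst z) (snd z)) z) ->
  forall s p, continuity_2d_pt F s p.
Proof. intros H s p. apply continuity_2d_pt_filterlim. apply (H (s, p)). Qed.

Lemma conv_cont (be fa : R -> R) :
  (forall x, continuous be x) -> (forall x, continuous fa x) ->
  forall y, continuous (fun y => RInt (fun r => be (y - r) * fa r) 0 y) y.
Proof.
  intros Hb Hf y.
  set (h := fun p r => be (p - r) * fa r).
  assert (Hh : forall s p, continuity_2d_pt (fun r p => h p r) s p).
  { apply cont2d_of. intros z. unfold h.
    apply (continuous_mult (fun z : R * R => be (snd z - fst z)) (fun z : R * R => fa (fst z))).
    - apply continuous_comp. apply (continuous_minus (fun z : R * R => snd z) (fun z : R * R => fst z)).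
      destruct z; apply continuous_snd. destruct z; apply continuous_fst. apply Hb.
    - apply continuous_comp. destruct z; apply continuous_fst. apply Hf. }
  assert (HQ := JC (fun r p => h p r) Hh).
  exact (cont_diag _ HQ y).
Qed.

Lemma RInt_ext' (f g : R -> R) (a b : R) :
  (forall x, Rmin a b < x < Rmax a b -> f x = g x) -> RInt f a b = RInt g a b.
Proof. intros H. apply (RInt_ext (V:=R_CompleteNormedModule)); auto. Qed.

Lemma RInt_reflect (g : R -> R) a b : (forall x, continuous g x) ->
  RInt (fun y => g (1 - y)) a b = RInt g (1 - b) (1 - a).
Proof.
  intros Hg.
  assert (H := RInt_comp_lin (V:=R_CompleteNormedModule) g (-1) 1 a b (cont_everywhere_RInt g Hg _ _)).
  replace (-1 * a + 1) with (1 - a) in H by ring.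
  replace (-1 * b + 1) with (1 - b) in H by ring.
  rewrite <- (opp_RInt_swap (V:=R_CompleteNormedModule) g (1 - b) (1 - a)) in H by (apply cont_everywhere_RInt; auto).
  rewrite (RInt_ext' _ (fun y => (-1) * g (1 - y))) in H.
  2:{ intros x _. unfold scal; simpl. unfold mult; simpl. f_equal. f_equal. ring. }
  rewrite RInt_scal' in H.
  2:{ apply cont_everywhere_RInt. intros x. eapply cont_ext; [|exact (cont_shift g 1 (-1) x Hg)]. intros; simpl. f_equal; ring. }
  unfold opp in H; simpl in H.
  lra.
Qed.

Lemma boundary (beta k khat : R -> R) (u : R -> R -> R) (be ke : R -> R) :
  is_closed_loop_solution beta khat u ->
  is_backstepping_kernel beta k ->
  (forall x, 0 <= x <= 1 -> continuous khat x) ->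
  (forall x, continuous be x) -> (forall x, 0 <= x <= 1 -> be x = beta x) ->
  (forall x, continuous ke x) -> (forall x, 0 <= x <= 1 -> ke x = k x) ->
  forall t, 0 <= t ->
  u 0 (t + 1) = RInt (fun y => (khat (1 - y) - k (1 - y)) * u y t) 0 1.
Proof.
  intros Hsol [Hkc Hkeq] Hkh Hbc Hbeq Hkec Hkeeq t Ht.
  assert (Hch := charac beta khat u be Hsol Hbc Hbeq).
  destruct Hsol as [Hc [_ Hbd]].
  set (fa := fun s => u 0 (Rmax 0 (t + s))).
  assert (Hfa : forall x, continuous fa x).
  { intros x. unfold fa. apply (continuous_comp (fun s => t + s) (fun s => u 0 (Rmax 0 s))).
    apply (cont_ext (fun s => t + 1 * s)). intros; ring. apply cont_aff.
    apply ae_cont; auto. }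
  assert (Hu1 := Hch 1 t ltac:(lra) Ht).
  rewrite (Hbd t Ht) in Hu1.
  assert (Hexu : forall g : R -> R, (forall x, 0 <= x <= 1 -> continuous g x) ->
            ex_RInt (fun y => g (1 - y) * u y t) 0 1).
  { intros g Hg. apply (ex_RInt_continuous (V:=R_CompleteNormedModule)).
    rewrite Rmin_left, Rmax_right by lra. intros z Hz.
    apply cont_mult'.
    - apply (continuous_comp (fun y => 1 - y) g).
      apply (cont_ext (fun s => 1 + (-1) * s)). intros; ring. apply cont_aff.
      apply Hg; lra.
    - apply (continuous_comp_2 (fun y => y) (fun _ => t) u). apply continuous_id. apply continuous_const.
      apply Hc; lra. }
  rewrite (RInt_ext' _ (fun y => khat (1 - y) * u y t - k (1 - y) * u y t)) by (intros; ring).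
  rewrite RInt_minus' by (apply Hexu; auto).
  set (I := fun y => RInt (fun r => be (y - r) * fa r) 0 y).
  assert (HI : forall y, continuous I y) by (intros y; exact (conv_cont be fa Hbc Hfa y)).
  assert (S1 : RInt (fun y => k (1 - y) * u y t) 0 1 =
               RInt (fun y => ke (1 - y) * fa y - ke (1 - y) * I y) 0 1).
  { apply RInt_ext'. rewrite Rmin_left, Rmax_right by lra. intros y Hy.
    rewrite Hkeeq by lra. rewrite (Hch y t) by lra. unfold I, fa.
    rewrite (Rmax_right 0 (t + y)) by lra. ring. }
  assert (Hc1 : forall y, continuous (fun y => ke (1 - y) * fa y) y).
  { intros y. apply cont_mult'. eapply cont_ext; [|exact (cont_shift ke 1 (-1) y Hkec)]. intros; simpl; f_equal; ring. apply Hfa. }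
  assert (Hc2 : forall y, continuous (fun y => ke (1 - y) * I y) y).
  { intros y. apply cont_mult'. eapply cont_ext; [|exact (cont_shift ke 1 (-1) y Hkec)]. intros; simpl; f_equal; ring. apply HI. }
  rewrite RInt_minus' in S1 by (apply cont_everywhere_RInt; auto).
  set (h := fun y r => ke (1 - y) * (be (y - r) * fa r)).
  assert (Hh : forall y p, continuity_2d_pt h y p).
  { apply cont2d_of. intros z. unfold h.
    apply (continuous_mult (fun z : R * R => ke (1 - fst z)) (fun z : R * R => be (fst z - snd z) * fa (snd z))).
    - apply continuous_comp. apply (continuous_minus (fun z : R * R => 1) (fun z : R * R => fst z)).
      apply continuous_const. destruct z; apply continuous_fst. apply Hkec.
    - apply (continuous_mult (fun z : R * R => be (fst z - snd z)) (fun z : R * R => fa (snd z))).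
      + apply continuous_comp. apply (continuous_minus (fun z : R * R => fst z) (fun z : R * R => snd z)).
        destruct z; apply continuous_fst. destruct z; apply continuous_snd. apply Hbc.
      + apply continuous_comp. destruct z; apply continuous_snd. apply Hfa. }
  assert (S2 : RInt (fun y => ke (1 - y) * I y) 0 1 = RInt (fun y => RInt (fun r => h y r) 0 y) 0 1).
  { apply RInt_ext'. intros y _. unfold I, h. rewrite RInt_scal'. reflexivity.
    apply cont_everywhere_RInt. intros x. apply cont_mult'.
    eapply cont_ext; [|exact (cont_shift be y (-1) x Hbc)]. intros; simpl; f_equal; ring.
    apply Hfa. }
  rewrite (fubini_tri h Hh 1) in S2.
  assert (S3 : RInt (fun r => RInt (fun y => h y r) r 1) 0 1 =
               RInt (fun r => fa r * (ke (1 - r) + be (1 - r))) 0 1).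
  { apply RInt_ext'. rewrite Rmin_left, Rmax_right by lra. intros r Hr.
    unfold h.
    rewrite (RInt_ext' _ (fun y => fa r * (ke (1 - y) * be (y - r)))) by (intros; ring).
    rewrite RInt_scal'.
    2:{ apply cont_everywhere_RInt. intros x. apply cont_mult'.
        eapply cont_ext; [|exact (cont_shift ke 1 (-1) x Hkec)]. intros; simpl; f_equal; ring.
        eapply cont_ext; [|exact (cont_shift be (-r) 1 x Hbc)]. intros; simpl; f_equal; ring. }
    f_equal.
    set (g := fun y' => ke y' * be (1 - r - y')).
    assert (Hg : forall x, continuous g x).
    { intros x. unfold g. apply cont_mult'. apply Hkec.
      eapply cont_ext; [|exact (cont_shift be (1 - r) (-1) x Hbc)]. intros; simpl; f_equal; ring. }
    rewrite (RInt_ext' _ (fun y => g (1 - y))).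
    2:{ intros x _. unfold g. f_equal. f_equal. ring. }
    rewrite RInt_reflect by auto. replace (1 - 1) with 0 by ring.
    rewrite (RInt_ext' _ (fun y => beta (1 - r - y) * k y)).
    2:{ rewrite Rmin_left, Rmax_right by lra. intros x Hx. unfold g.
        rewrite Hkeeq by lra. rewrite Hbeq by lra. ring. }
    assert (HK := Hkeq (1 - r) ltac:(lra)).
    rewrite Hkeeq by lra. rewrite Hbeq by lra. lra. }
  rewrite S3 in S2.
  rewrite (RInt_ext' (fun r => fa r * (ke (1 - r) + be (1 - r))) (fun r => ke (1 - r) * fa r + be (1 - r) * fa r)) in S2 by (intros; ring).
  rewrite RInt_plus' in S2.
  2:{ apply cont_everywhere_RInt; auto. }
  2:{ apply cont_everywhere_RInt. intros y. apply cont_mult'. eapply cont_ext; [|exact (cont_shift be 1 (-1) y Hbc)]. intros; simpl; f_equal; ring. apply Hfa. }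
  unfold fa in *. lra.
Qed.

Definition cont01 (f : R -> R) := forall x, 0 <= x <= 1 -> continuous f x.

Lemma ex01 f : cont01 f -> ex_RInt f 0 1.
Proof.
  intros H. apply (ex_RInt_continuous (V:=R_CompleteNormedModule)).
  rewrite Rmin_left, Rmax_right by lra. auto.
Qed.

Lemma cont01_abs f : cont01 f -> cont01 (fun x => Rabs (f x)).
Proof. intros H x Hx. apply continuous_Rabs_comp. auto. Qed.

Lemma cont01_sq f : cont01 f -> cont01 (fun x => f x ^ 2).
Proof.
  intros H x Hx. eapply cont_ext with (fun y => f y * f y). intros; ring.
  apply cont_mult'; auto.
Qed.

Lemma cont01_mult f g : cont01 f -> cont01 g -> cont01 (fun x => f x * g x).
Proof. intros H1 H2 x Hx. apply cont_mult'; auto. Qed.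

Lemma cont01_minus f g : cont01 f -> cont01 g -> cont01 (fun x => f x - g x).
Proof. intros H1 H2 x Hx. apply cont_minus'; auto. Qed.

Lemma cont01_plus f g : cont01 f -> cont01 g -> cont01 (fun x => f x + g x).
Proof. intros H1 H2 x Hx. apply cont_plus'; auto. Qed.

Lemma cont01_const c : cont01 (fun _ => c).
Proof. intros x _. apply continuous_const. Qed.

Lemma cont01_all f : (forall x, continuous f x) -> cont01 f.
Proof. intros H x _. auto. Qed.

Lemma RInt_le01 f g : cont01 f -> cont01 g -> (forall x, 0 <= x <= 1 -> f x <= g x) ->
  RInt f 0 1 <= RInt g 0 1.
Proof.
  intros. apply RInt_le; try lra; try apply ex01; auto. intros; apply H1; lra.
Qed.

Lemma RInt_ge0_01 f : cont01 f -> (forall x, 0 <= x <= 1 -> 0 <= f x) -> 0 <= RInt f 0 1.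
Proof. intros. apply RInt_ge_0; try lra; try apply ex01; auto. intros; apply H0; lra. Qed.

Lemma CS01 f : cont01 f -> (RInt (fun x => Rabs (f x)) 0 1) ^ 2 <= RInt (fun x => f x ^ 2) 0 1.
Proof.
  intros Hf. set (m := RInt (fun x => Rabs (f x)) 0 1).
  assert (H0 : 0 <= RInt (fun x => (Rabs (f x) - m) ^ 2) 0 1).
  { apply RInt_ge0_01. apply cont01_sq, cont01_minus, cont01_const. apply cont01_abs; auto.
    intros; apply pow2_ge_0. }
  rewrite (RInt_ext' _ (fun x => f x ^ 2 - (2 * m) * Rabs (f x) + m ^ 2)) in H0.
  2:{ intros x _. rewrite <- (pow2_abs (f x)). ring. }
  assert (Hq : ex_RInt (fun x => f x ^ 2) 0 1) by (apply ex01, cont01_sq; auto).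
  assert (Ha : ex_RInt (fun x => Rabs (f x)) 0 1) by (apply ex01, cont01_abs; auto).
  assert (Has : ex_RInt (fun x => 2 * m * Rabs (f x)) 0 1) by (apply (ex_RInt_scal (V:=R_NormedModule) (fun x => Rabs (f x))); auto).
  assert (Hc : RInt (fun _ : R => m ^ 2) 0 1 = m ^ 2).
  { rewrite RInt_const. unfold scal; simpl; unfold mult; simpl. ring. }
  rewrite RInt_plus' in H0.
  2:{ apply (ex_RInt_minus (V:=R_NormedModule) (fun x => f x ^ 2)); auto. }
  2:{ apply ex_RInt_const. }
  rewrite RInt_minus' in H0 by auto.
  rewrite RInt_scal' in H0 by auto.
  rewrite Hc in H0. fold m in H0. nra.
Qed.

Lemma bd_bound (d g : R -> R) (eps : R) :
  cont01 (fun y => d (1 - y) * g y) -> cont01 g ->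
  (forall x, 0 <= x <= 1 -> Rabs (d x) <= eps) ->
  (RInt (fun y => d (1 - y) * g y) 0 1) ^ 2 <= eps ^ 2 * RInt (fun y => g y ^ 2) 0 1.
Proof.
  intros Hdg Hg Hd.
  assert (He : 0 <= eps) by (specialize (Hd 0 ltac:(lra)); pose proof (Rabs_pos (d 0)); lra).
  assert (A1 : Rabs (RInt (fun y => d (1 - y) * g y) 0 1) <= eps * RInt (fun y => Rabs (g y)) 0 1).
  { eapply Rle_trans. apply abs_RInt_le. lra. apply ex01; auto.
    rewrite <- RInt_scal' by (apply ex01, cont01_abs; auto).
    apply RInt_le01. apply cont01_abs; auto.
    apply (cont01_mult (fun _ => eps)). apply cont01_const. apply cont01_abs; auto.
    intros x Hx. rewrite Rabs_mult. apply Rmult_le_compat_r. apply Rabs_pos. apply Hd; lra. }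
  assert (A2 := CS01 g Hg).
  assert (A3 : 0 <= RInt (fun y => Rabs (g y)) 0 1).
  { apply RInt_ge0_01. apply cont01_abs; auto. intros; apply Rabs_pos. }
  rewrite <- (pow2_abs (RInt _ 0 1)).
  apply Rle_trans with ((eps * RInt (fun y => Rabs (g y)) 0 1) ^ 2).
  { apply pow_incr. split. apply Rabs_pos. auto. }
  rewrite Rpow_mult_distr. apply Rmult_le_compat_l. apply pow_le; auto. auto.
Qed.

Lemma is_derive_mult' (f g : R -> R) x df dg : is_derive f x df -> is_derive g x dg ->
  is_derive (fun y => f y * g y) x (df * g x + f x * dg).
Proof. intros. apply (is_derive_mult (K:=R_AbsRing) f g); auto. intros; apply Rmult_comm. Qed.

Lemma is_derive_minus' (f g : R -> R) x df dg : is_derive f x df -> is_derive g x dg ->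
  is_derive (fun y => f y - g y) x (df - dg).
Proof. intros. apply (is_derive_minus (K:=R_AbsRing) (V:=R_NormedModule) f g); auto. Qed.

Lemma cont_abs' (f : R -> R) (x : R) : continuous f x -> continuous (fun y => Rabs (f y)) x.
Proof. intros. apply continuous_Rabs_comp; auto. Qed.

Lemma cont_sq' (f : R -> R) (x : R) : continuous f x -> continuous (fun y => f y ^ 2) x.
Proof. intros H. eapply cont_ext with (fun y => f y * f y). intros; ring. apply cont_mult'; auto. Qed.

Lemma RInt_sub_le (g : R -> R) y : (forall x, continuous g x) -> (forall x, 0 <= g x) -> 0 <= y <= 1 ->
  RInt g 0 y <= RInt g 0 1.
Proof.
  intros Hg Hp Hy.
  rewrite <- (RInt_Chasles (V:=R_CompleteNormedModule) g 0 y 1) by (apply cont_everywhere_RInt; auto).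
  unfold plus; simpl.
  assert (0 <= RInt g y 1). { apply RInt_ge_0; try lra. apply cont_everywhere_RInt; auto. intros; auto. }
  lra.
Qed.

Lemma conv_abs_le (be fa : R -> R) bb y :
  (forall x, continuous be x) -> (forall x, continuous fa x) -> (forall x, Rabs (be x) <= bb) -> 0 <= y ->
  Rabs (RInt (fun r => be (y - r) * fa r) 0 y) <= bb * RInt (fun r => Rabs (fa r)) 0 y.
Proof.
  intros Hb Hf Hbb Hy.
  assert (Hc : forall x, continuous (fun r => be (y - r) * fa r) x).
  { intros x. apply cont_mult'. eapply cont_ext; [|exact (cont_shift be y (-1) x Hb)]. intros; simpl; f_equal; ring.
    apply Hf. }
  eapply Rle_trans. apply abs_RInt_le. auto. apply cont_everywhere_RInt; auto.
  rewrite <- RInt_scal' by (apply cont_everywhere_RInt; intros; apply cont_abs'; auto).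
  apply RInt_le; auto.
  apply cont_everywhere_RInt; intros; apply cont_abs'; auto.
  apply (ex_RInt_scal (V:=R_NormedModule) (fun r => Rabs (fa r))). apply cont_everywhere_RInt; intros; apply cont_abs'; auto.
  intros x _. rewrite Rabs_mult. apply Rmult_le_compat_r. apply Rabs_pos. auto.
Qed.

Lemma L2_conv_bound (be fa : R -> R) bb :
  (forall x, continuous be x) -> (forall x, continuous fa x) -> (forall x, Rabs (be x) <= bb) ->
  RInt (fun y => (fa y - RInt (fun r => be (y - r) * fa r) 0 y) ^ 2) 0 1
    <= (1 + bb) ^ 2 * RInt (fun y => fa y ^ 2) 0 1.
Proof.
  intros Hb Hf Hbb.
  assert (Hbb0 : 0 <= bb) by (specialize (Hbb 0); pose proof (Rabs_pos (be 0)); lra).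
  set (N := RInt (fun r => Rabs (fa r)) 0 1).
  set (Z := RInt (fun y => fa y ^ 2) 0 1).
  assert (HN : N ^ 2 <= Z) by (apply CS01; apply cont01_all; auto).
  assert (HN0 : 0 <= N).
  { apply RInt_ge0_01. apply cont01_abs, cont01_all; auto. intros; apply Rabs_pos. }
  set (J := fun y => RInt (fun r => be (y - r) * fa r) 0 y).
  assert (HJc : forall y, continuous J y) by (intros y; exact (conv_cont be fa Hb Hf y)).
  assert (HJ : forall y, 0 <= y <= 1 -> Rabs (J y) <= bb * N).
  { intros y Hy. eapply Rle_trans. apply (conv_abs_le be fa bb y Hb Hf Hbb). lra.
    apply Rmult_le_compat_l. exact Hbb0. unfold N.
    apply (RInt_sub_le (fun r => Rabs (fa r)) y). intros; apply cont_abs'; apply Hf.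
    intros; apply Rabs_pos. exact Hy. }
  apply Rle_trans with (RInt (fun y => (1 + bb) * (fa y ^ 2 + bb * N ^ 2)) 0 1).
  { apply RInt_le01.
    - apply cont01_sq, cont01_minus; apply cont01_all; auto.
    - apply (cont01_mult (fun _ => 1 + bb)). apply cont01_const.
      apply cont01_plus. apply cont01_sq, cont01_all; auto. apply cont01_const.
    - intros y Hy. specialize (HJ y Hy). fold (J y).
      assert (Hs : (fa y - J y) ^ 2 <= (Rabs (fa y) + bb * N) ^ 2).
      { rewrite <- (pow2_abs (fa y - J y)). apply pow_incr. split. apply Rabs_pos.
        unfold Rminus. eapply Rle_trans. apply Rabs_triang. rewrite Rabs_Ropp. lra. }
      eapply Rle_trans. exact Hs.
      assert (fa y ^ 2 = Rabs (fa y) ^ 2) by (rewrite pow2_abs; reflexivity).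
      assert (0 <= bb * (Rabs (fa y) - N) ^ 2) by (apply Rmult_le_pos; auto; apply pow2_ge_0).
      nra. }
  rewrite RInt_scal'.
  2:{ apply ex01. apply cont01_plus. apply cont01_sq, cont01_all; auto. apply cont01_const. }
  rewrite RInt_plus'.
  2:{ apply ex01, cont01_sq, cont01_all; auto. }
  2:{ apply ex_RInt_const. }
  assert (Hcst : RInt (fun _ => bb * N ^ 2) 0 1 = bb * N ^ 2).
  { rewrite RInt_const. unfold scal; simpl; unfold mult; simpl. ring. }
  rewrite Hcst. fold Z.
  assert (bb * N ^ 2 <= bb * Z) by (apply Rmult_le_compat_l; auto).
  nra.
Qed.

Lemma exp_mono a b : a <= b -> exp a <= exp b.
Proof. intros H. destruct (Req_dec a b) as [->|]; [lra| left; apply exp_increasing; lra]. Qed.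

Lemma L2_inv_bound (be fa : R -> R) bb :
  (forall x, continuous be x) -> (forall x, continuous fa x) -> (forall x, Rabs (be x) <= bb) ->
  RInt (fun y => fa y ^ 2) 0 1 <=
    (1 + bb * exp bb) ^ 2 * RInt (fun y => (fa y - RInt (fun r => be (y - r) * fa r) 0 y) ^ 2) 0 1.
Proof.
  intros Hb Hf Hbb.
  assert (Hbb0 : 0 <= bb) by (specialize (Hbb 0); pose proof (Rabs_pos (be 0)); lra).
  set (J := fun y => RInt (fun r => be (y - r) * fa r) 0 y).
  assert (HJc : forall y, continuous J y) by (intros y; exact (conv_cont be fa Hb Hf y)).
  set (v := fun y => fa y - J y).
  assert (Hvc : forall y, continuous v y) by (intros y; apply cont_minus'; auto).
  set (m := fun x => RInt (fun r => Rabs (fa r)) 0 x).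
  set (Nv := RInt (fun r => Rabs (v r)) 0 1).
  set (K := bb * exp bb).
  assert (HK0 : 0 <= K) by (unfold K; apply Rmult_le_pos; auto; left; apply exp_pos).
  assert (Hfa_le : forall x, 0 <= x -> Rabs (fa x) <= Rabs (v x) + bb * m x).
  { intros x Hx. replace (fa x) with (v x + J x) by (unfold v; ring).
    eapply Rle_trans. apply Rabs_triang. apply Rplus_le_compat_l. apply (conv_abs_le be fa bb x Hb Hf Hbb Hx). }
  set (G := fun x => RInt (fun s => exp (- bb * s) * Rabs (v s)) 0 x).
  set (phi := fun x => exp (- bb * x) * m x - G x).
  assert (Hcg : forall x, continuous (fun s => exp (- bb * s) * Rabs (v s)) x).
  { intros x. apply cont_mult'. apply continuous_exp_comp.
    eapply cont_ext; [|exact (cont_aff 0 (- bb) x)]. intros; simpl; ring. apply cont_abs'; auto. }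
  assert (Hdphi : forall x, is_derive phi x (- bb * exp (- bb * x) * m x + exp (- bb * x) * Rabs (fa x)
                     - exp (- bb * x) * Rabs (v x))).
  { intros x. unfold phi.
    apply (is_derive_minus' (fun x => exp (- bb * x) * m x) G).
    - apply (is_derive_mult' (fun x => exp (- bb * x)) m).
      + auto_derive; auto. ring.
      + unfold m. apply (derive_RInt0 (fun r => Rabs (fa r)) 0 x). intros; apply cont_abs'; apply Hf.
    - unfold G. apply (derive_RInt0 (fun s => exp (- bb * s) * Rabs (v s)) 0 x Hcg). }
  assert (Hphi : forall x, 0 <= x <= 1 -> phi x <= 0).
  { intros x Hx. destruct (Req_dec x 0) as [->|Hne].
    - unfold phi, m, G. rewrite !RInt_point. unfold zero; simpl. lra.
    - destruct (MVT_gen phi 0 x _ (fun y _ => Hdphi y)) as [c [Hc1 Hc2]].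
      + intros y _. apply continuity_pt_filterlim. apply (ex_derive_continuous (K:=R_AbsRing) phi).
        eexists; apply Hdphi.
      + rewrite Rmin_left, Rmax_right in Hc1 by lra.
        assert (Hp0 : phi 0 = 0).
        { unfold phi, m, G. rewrite !RInt_point. unfold zero; simpl. lra. }
        rewrite Hp0 in Hc2.
        assert (Hle := Hfa_le c ltac:(lra)).
        assert (He := exp_pos (- bb * c)).
        assert (exp (- bb * c) * Rabs (fa c) <= exp (- bb * c) * (Rabs (v c) + bb * m c))
          by (apply Rmult_le_compat_l; lra).
        assert (Hd : - bb * exp (- bb * c) * m c + exp (- bb * c) * Rabs (fa c) - exp (- bb * c) * Rabs (v c) <= 0) by nra.
        nra. }
  assert (HNv0 : 0 <= Nv).
  { apply RInt_ge0_01. apply cont01_abs, cont01_all; auto. intros; apply Rabs_pos. }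
  assert (Hm : forall x, 0 <= x <= 1 -> m x <= exp bb * Nv).
  { intros x Hx. specialize (Hphi x Hx). unfold phi in Hphi.
    assert (HG : G x <= Nv).
    { apply Rle_trans with (RInt (fun s => Rabs (v s)) 0 x).
      - apply RInt_le. lra. apply cont_everywhere_RInt; auto.
        apply cont_everywhere_RInt; intros; apply cont_abs'; auto.
        intros s Hs. rewrite <- (Rmult_1_l (Rabs (v s))) at 2. apply Rmult_le_compat_r. apply Rabs_pos.
        rewrite <- exp_0. apply exp_mono. nra.
      - apply RInt_sub_le; auto. intros; apply cont_abs'; auto. intros; apply Rabs_pos. }
    assert (E1 : exp (- bb * x) * exp (bb * x) = 1).
    { rewrite <- exp_plus. replace (- bb * x + bb * x) with 0 by ring. apply exp_0. }
    assert (E2 : exp (bb * x) <= exp bb) by (apply exp_mono; nra).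
    assert (Hm0 : 0 <= m x).
    { apply RInt_ge_0. lra. apply cont_everywhere_RInt; intros; apply cont_abs'; auto. intros; apply Rabs_pos. }
    assert (m x <= exp (bb * x) * Nv).
    { replace (m x) with (exp (bb * x) * (exp (- bb * x) * m x)) by (rewrite <- Rmult_assoc, (Rmult_comm (exp (bb*x))), E1; ring).
      apply Rmult_le_compat_l. left; apply exp_pos. lra. }
    apply Rle_trans with (exp (bb * x) * Nv); auto. apply Rmult_le_compat_r; auto. }
  assert (Hpt : forall x, 0 <= x <= 1 -> Rabs (fa x) <= Rabs (v x) + K * Nv).
  { intros x Hx. eapply Rle_trans. apply Hfa_le; lra. unfold K.
    specialize (Hm x Hx). rewrite Rmult_assoc. apply Rplus_le_compat_l. apply Rmult_le_compat_l; auto. }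
  set (W := RInt (fun y => v y ^ 2) 0 1).
  assert (HNW : Nv ^ 2 <= W) by (apply CS01, cont01_all; auto).
  change (RInt (fun y => fa y ^ 2) 0 1 <= (1 + K) ^ 2 * W).
  apply Rle_trans with (RInt (fun y => (1 + K) * (v y ^ 2 + K * Nv ^ 2)) 0 1).
  { apply RInt_le01.
    - apply cont01_sq, cont01_all; auto.
    - apply (cont01_mult (fun _ => 1 + K)). apply cont01_const.
      apply cont01_plus. apply cont01_sq, cont01_all; auto. apply cont01_const.
    - intros y Hy. specialize (Hpt y Hy).
      assert (Hs : fa y ^ 2 <= (Rabs (v y) + K * Nv) ^ 2).
      { rewrite <- (pow2_abs (fa y)). apply pow_incr. split. apply Rabs_pos. auto. }
      eapply Rle_trans. exact Hs.
      assert (v y ^ 2 = Rabs (v y) ^ 2) by (rewrite pow2_abs; reflexivity).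
      assert (0 <= K * (Rabs (v y) - Nv) ^ 2) by (apply Rmult_le_pos; auto; apply pow2_ge_0).
      nra. }
  rewrite RInt_scal'.
  2:{ apply ex01. apply cont01_plus. apply cont01_sq, cont01_all; auto. apply cont01_const. }
  rewrite RInt_plus'.
  2:{ apply ex01, cont01_sq, cont01_all; auto. }
  2:{ apply ex_RInt_const. }
  assert (Hcst : RInt (fun _ => K * Nv ^ 2) 0 1 = K * Nv ^ 2).
  { rewrite RInt_const. unfold scal; simpl; unfold mult; simpl. ring. }
  rewrite Hcst. fold W.
  assert (K * Nv ^ 2 <= K * W) by (apply Rmult_le_compat_l; auto).
  nra.
Qed.

Lemma derive_RInt_shift (g : R -> R) a s c : (forall x, continuous g x) ->
  is_derive (fun t => RInt g a (t + c)) s (g (s + c)).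
Proof.
  intros Hg.
  assert (H := is_derive_comp (K:=R_AbsRing) (V:=R_NormedModule) (fun b => RInt g a b) (fun t => t + c) s (g (s + c)) 1).
  assert (Hl : is_derive (fun t : R => t + c) s 1) by (auto_derive; auto; ring).
  specialize (H (derive_RInt0 g a (s + c) Hg) Hl).
  unfold scal in H; simpl in H; unfold mult in H; simpl in H. rewrite Rmult_1_l in H. exact H.
Qed.

Lemma delay_decay (y : R -> R) (A r : R) :
  (forall x, continuous y x) -> (forall x, 0 <= y x) -> 0 <= A -> 0 < r ->
  0 < 1 - A * (exp r - 1) / r ->
  (forall t, 0 <= t -> y (t + 1) <= A * RInt y t (t + 1)) ->
  forall t, 0 <= t ->
    RInt y t (t + 1) <= exp r / (1 - A * (exp r - 1) / r) * exp (- r * t) * RInt y 0 1.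
Proof.
  intros Hy Hy0 HA Hr HD Hdel.
  set (D := 1 - A * (exp r - 1) / r) in *.
  set (P := exp r / D).
  assert (HP : 0 < P) by (unfold P; apply Rdiv_lt_0_compat; auto; apply exp_pos).
  assert (HPD : P * D = exp r) by (unfold P; field; lra).
  set (b0 := A * P / r).
  assert (Hb0 : 0 <= b0) by (unfold b0; apply Rmult_le_pos; [apply Rmult_le_pos; lra| left; apply Rinv_0_lt_compat; lra]).
  set (al := 1 + b0).
  assert (Hal : al * exp r - b0 = P).
  { unfold al, b0. transitivity (P * D + A * P / r * (exp r - 1)).
    rewrite HPD; ring. unfold D; field; lra. }
  set (ey := fun s => exp (r * s) * y s).
  assert (Hey : forall x, continuous ey x).
  { intros x. unfold ey. apply cont_mult'. apply continuous_exp_comp.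
    eapply cont_ext; [|exact (cont_aff 0 r x)]. intros; simpl; ring. auto. }
  set (E := fun t => RInt ey 0 t).
  set (Y := fun t => RInt y 0 t).
  assert (HexY : forall a b, ex_RInt y a b) by (intros; apply cont_everywhere_RInt; auto).
  assert (HexE : forall a b, ex_RInt ey a b) by (intros; apply cont_everywhere_RInt; auto).
  assert (HzY : forall t, RInt y t (t + 1) = Y (t + 1) - Y t).
  { intros t. unfold Y. rewrite <- (RInt_Chasles (V:=R_CompleteNormedModule) y 0 t (t + 1)) by auto.
    unfold plus; simpl. lra. }
  assert (HzE : forall t, RInt ey t (t + 1) = E (t + 1) - E t).
  { intros t. unfold E. rewrite <- (RInt_Chasles (V:=R_CompleteNormedModule) ey 0 t (t + 1)) by auto.
    unfold plus; simpl. lra. }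
  set (W := fun t => al * (E (t + 1) - E t) - b0 * exp (r * t) * (Y (t + 1) - Y t)).
  set (dW := fun t => al * (ey (t + 1) - ey t) - (b0 * (r * exp (r * t)) * (Y (t + 1) - Y t)
                        + b0 * exp (r * t) * (y (t + 1) - y t))).
  assert (HdW : forall t, is_derive W t (dW t)).
  { intros t. unfold W, dW.
    apply is_derive_minus'.
    - apply (is_derive_scal (fun t => E (t + 1) - E t)).
      apply is_derive_minus'.
      + unfold E. apply (derive_RInt_shift ey 0 t 1 Hey).
      + unfold E. apply (derive_RInt0 ey 0 t Hey).
    - apply (is_derive_mult' (fun t => b0 * exp (r * t)) (fun t => Y (t + 1) - Y t)).
      + auto_derive; auto. ring.
      + apply is_derive_minus'.
        * unfold Y. apply (derive_RInt_shift y 0 t 1 Hy).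
        * unfold Y. apply (derive_RInt0 y 0 t Hy). }
  assert (HdW0 : forall t, 0 <= t -> dW t <= 0).
  { intros t Ht. unfold dW, ey.
    replace (exp (r * (t + 1))) with (exp (r * t) * exp r)
      by (rewrite <- exp_plus; f_equal; ring).
    specialize (Hdel t Ht). rewrite HzY in Hdel.
    assert (He := exp_pos (r * t)). specialize (Hy0 t).
    assert (Hk : b0 * r = A * P) by (unfold b0; field; lra).
    assert (Hx : exp (r * t) * (P * y (t + 1)) <= exp (r * t) * (P * (A * (Y (t + 1) - Y t)))).
    { apply Rmult_le_compat_l. lra. apply Rmult_le_compat_l; lra. }
    assert (Heq : al * (exp (r * t) * exp r * y (t + 1) - exp (r * t) * y t) -
      (b0 * (r * exp (r * t)) * (Y (t + 1) - Y t) + b0 * exp (r * t) * (y (t + 1) - y t))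
      = exp (r * t) * ((al * exp r - b0) * y (t + 1)) - exp (r * t) * ((b0 * r) * (Y (t + 1) - Y t))
        - exp (r * t) * ((al - b0) * y t)).
    { ring. }
    rewrite Heq, Hal, Hk. unfold al. replace (1 + b0 - b0) with 1 by ring.
    assert (0 <= exp (r * t) * (1 * y t)) by (apply Rmult_le_pos; lra).
    lra. }
  assert (HWmono : forall t, 0 <= t -> W t <= W 0).
  { intros t Ht. destruct (Req_dec t 0) as [->|Hne]. lra.
    destruct (MVT_gen W 0 t dW) as [c [Hc1 Hc2]].
    - intros; apply HdW.
    - intros x _. apply continuity_pt_filterlim. apply (ex_derive_continuous (K:=R_AbsRing) W).
      eexists; apply HdW.
    - rewrite Rmin_left, Rmax_right in Hc1 by lra.
      assert (dW c <= 0) by (apply HdW0; lra).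
      assert (dW c * (t - 0) <= 0) by (apply Rmult_le_0_r; lra).
      lra. }
  assert (HEl : forall t, exp (r * t) * RInt y t (t + 1) <= E (t + 1) - E t).
  { intros t. rewrite <- HzE. rewrite <- RInt_scal' by auto.
    apply RInt_le. lra. apply (ex_RInt_scal (V:=R_NormedModule)); auto. auto.
    intros x Hx. unfold ey. apply Rmult_le_compat_r. auto.
    left; apply exp_increasing. nra. }
  assert (HEu : E 1 <= exp r * Y 1).
  { unfold E, Y. rewrite <- RInt_scal' by auto.
    apply RInt_le. lra. auto. apply (ex_RInt_scal (V:=R_NormedModule)); auto.
    intros x Hx. unfold ey. apply Rmult_le_compat_r. auto.
    left; apply exp_increasing. nra. }
  intros t Ht.
  assert (H1 := HWmono t Ht).
  assert (HW0 : W 0 <= P * RInt y 0 1).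
  { unfold W. replace (0 + 1) with 1 by ring. unfold E at 2, Y at 2. rewrite !RInt_point.
    unfold zero; simpl. replace (r * 0) with 0 by ring. rewrite exp_0.
    replace (RInt y 0 1) with (Y 1) by reflexivity. rewrite <- Hal.
    assert (al * E 1 <= al * (exp r * Y 1)) by (apply Rmult_le_compat_l; unfold al; lra).
    lra. }
  assert (HWt : exp (r * t) * RInt y t (t + 1) <= W t).
  { unfold W. rewrite <- HzY. specialize (HEl t).
    assert (al * (exp (r * t) * RInt y t (t + 1)) <= al * (E (t + 1) - E t))
      by (apply Rmult_le_compat_l; unfold al; lra).
    unfold al in *. lra. }
  assert (Hexp : exp (- r * t) * exp (r * t) = 1).
  { rewrite <- exp_plus. replace (- r * t + r * t) with 0 by ring. apply exp_0. }
  replace (RInt y t (t + 1)) with (exp (- r * t) * (exp (r * t) * RInt y t (t + 1)))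
    by (rewrite <- Rmult_assoc, Hexp; ring).
  assert (exp (- r * t) * (exp (r * t) * RInt y t (t + 1)) <= exp (- r * t) * (P * RInt y 0 1))
    by (apply Rmult_le_compat_l; [left; apply exp_pos| lra]).
  change (exp r / D) with P. change (Y 1) with (RInt y 0 1). nra.
Qed.

Lemma nonincr_deriv (G dG : R -> R) a b :
  (forall x, a <= x <= b -> is_derive G x (dG x)) -> (forall x, a <= x <= b -> dG x <= 0) ->
  forall x y, a <= x -> x <= y -> y <= b -> G y <= G x.
Proof.
  intros Hd Hn x y Hx Hxy Hy. destruct (Req_dec x y) as [->|Hne]. lra.
  destruct (MVT_gen G x y dG) as [c [Hc1 Hc2]].
  - intros z Hz. rewrite Rmin_left, Rmax_right in Hz by lra. apply Hd; lra.
  - intros z Hz. rewrite Rmin_left, Rmax_right in Hz by lra. apply continuity_pt_filterlim.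
    apply (ex_derive_continuous (K:=R_AbsRing) G). eexists; apply Hd; lra.
  - rewrite Rmin_left, Rmax_right in Hc1 by lra.
    assert (dG c <= 0) by (apply Hn; lra).
    assert (dG c * (y - x) <= 0) by (apply Rmult_le_0_r; lra). lra.
Qed.

Lemma nondecr_deriv (G dG : R -> R) a b :
  (forall x, a <= x <= b -> is_derive G x (dG x)) -> (forall x, a <= x <= b -> 0 <= dG x) ->
  forall x y, a <= x -> x <= y -> y <= b -> G x <= G y.
Proof.
  intros Hd Hn x y Hx Hxy Hy.
  assert (H := nonincr_deriv (fun z => - G z) (fun z => - dG z) a b).
  assert (G' : - G y <= - G x).
  { apply H; auto. intros z Hz. apply (is_derive_opp (K:=R_AbsRing) (V:=R_NormedModule) G). auto.
    intros z Hz. specialize (Hn z Hz). lra. }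
  lra.
Qed.

Lemma concave_nonneg (F dF ddF : R -> R) a b :
  (forall x, a <= x <= b -> is_derive F x (dF x)) ->
  (forall x, a <= x <= b -> is_derive dF x (ddF x)) ->
  (forall x, a <= x <= b -> ddF x <= 0) ->
  0 <= F a -> 0 <= F b -> forall x, a <= x <= b -> 0 <= F x.
Proof.
  intros Hd Hdd Hn Ha Hb x Hx.
  destruct (Req_dec x a) as [->|Hxa]. auto.
  destruct (Req_dec x b) as [->|Hxb]. auto.
  destruct (Rle_or_lt 0 (F x)) as [|Hneg]; auto. exfalso.
  destruct (MVT_gen F a x dF) as [c1 [Hc1 Hc1']].
  - intros z Hz. rewrite Rmin_left, Rmax_right in Hz by lra. apply Hd; lra.
  - intros z Hz. rewrite Rmin_left, Rmax_right in Hz by lra. apply continuity_pt_filterlim.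
    apply (ex_derive_continuous (K:=R_AbsRing) F). eexists; apply Hd; lra.
  - destruct (MVT_gen F x b dF) as [c2 [Hc2 Hc2']].
    + intros z Hz. rewrite Rmin_left, Rmax_right in Hz by lra. apply Hd; lra.
    + intros z Hz. rewrite Rmin_left, Rmax_right in Hz by lra. apply continuity_pt_filterlim.
      apply (ex_derive_continuous (K:=R_AbsRing) F). eexists; apply Hd; lra.
    + rewrite Rmin_left, Rmax_right in Hc1, Hc2 by lra.
      assert (Hm := nonincr_deriv dF ddF a b Hdd Hn c1 c2 ltac:(lra) ltac:(lra) ltac:(lra)).
      assert (dF c1 * (x - a) < 0) by lra.
      assert (dF c2 * (b - x) > 0) by lra.
      assert (dF c1 < 0).
      { destruct (Rle_or_lt 0 (dF c1)); auto. assert (0 <= dF c1 * (x - a)) by (apply Rmult_le_pos; lra). lra. }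
      assert (dF c2 > 0).
      { destruct (Rle_or_lt (dF c2) 0); auto. assert (dF c2 * (b - x) <= 0) by (apply Rmult_le_0_r; lra). lra. }
      lra.
Qed.

Definition Hf (c x : R) := (c + (c - 1) * x) * (1 - exp (- x)) - x * c * (1 - exp (- c)).
Definition dHf (c x : R) := (c - 1) * (1 - exp (- x)) + (c + (c - 1) * x) * exp (- x) - c * (1 - exp (- c)).
Definition ddHf (c x : R) := exp (- x) * (c - 2 - (c - 1) * x).

Lemma Hf_d c x : is_derive (Hf c) x (dHf c x).
Proof. unfold Hf, dHf. auto_derive; auto. ring. Qed.

Lemma dHf_d c x : is_derive (dHf c) x (ddHf c x).
Proof. unfold dHf, ddHf. auto_derive; auto. ring. Qed.

Lemma Hf_nonneg c x : 0 < c -> 0 <= x <= c -> 0 <= Hf c x.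
Proof.
  intros Hc Hx.
  assert (H0 : Hf c 0 = 0) by (unfold Hf; rewrite Ropp_0, exp_0; ring).
  assert (Hcc : Hf c c = 0) by (unfold Hf; ring).
  assert (Hd0 : 0 < dHf c 0).
  { unfold dHf. rewrite Ropp_0, exp_0. assert (H := exp_pos (- c)). nra. }
  destruct (Rle_or_lt c 2) as [Hc2|Hc2].
  - apply (concave_nonneg (Hf c) (dHf c) (ddHf c) 0 c).
    + intros; apply Hf_d.
    + intros; apply dHf_d.
    + intros z Hz. unfold ddHf. assert (H := exp_pos (- z)).
      assert (c - 2 - (c - 1) * z <= 0) by nra.
      apply Rmult_le_0_l; lra.
    + lra.
    + lra.
    + lra.
  - set (x1 := (c - 2) / (c - 1)).
    assert (Hx1 : 0 < x1 < c).
    { unfold x1. split. apply Rdiv_lt_0_compat; lra.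
      apply Rmult_lt_reg_r with (c - 1). lra. unfold Rdiv. rewrite Rmult_assoc, Rinv_l by lra. nra. }
    assert (Hs : forall z, c - 2 - (c - 1) * z = (c - 1) * (x1 - z)).
    { intros z. unfold x1. field. lra. }
    (* on [0, x1], dHf increasing, so dHf > 0 and Hf increasing *)
    assert (Hinc : forall z, 0 <= z <= x1 -> 0 <= Hf c z).
    { intros z Hz.
      assert (HdH : forall w, 0 <= w <= x1 -> 0 <= dHf c w).
      { intros w Hw.
        assert (dHf c 0 <= dHf c w).
        { apply (nondecr_deriv (dHf c) (ddHf c) 0 x1); try lra.
          intros; apply dHf_d. intros v Hv. unfold ddHf. rewrite Hs.
          apply Rmult_le_pos. left; apply exp_pos. apply Rmult_le_pos; lra. }
        lra. }
      rewrite <- H0. apply (nondecr_deriv (Hf c) (dHf c) 0 x1); try lra.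
      intros; apply Hf_d. intros w Hw; apply HdH; lra. }
    destruct (Rle_or_lt x x1) as [Hxx|Hxx].
    + apply Hinc; lra.
    + apply (concave_nonneg (Hf c) (dHf c) (ddHf c) x1 c); try lra.
      * intros; apply Hf_d.
      * intros; apply dHf_d.
      * intros z Hz. unfold ddHf. rewrite Hs. assert (H := exp_pos (- z)).
        assert ((c - 1) * (x1 - z) <= 0) by nra.
        apply Rmult_le_0_l; lra.
      * apply Hinc; lra.
Qed.

Lemma numeric (c A : R) : 0 < c -> 0 < A -> A < c ^ 2 * exp (- c) ->
  let r := c - exp c / c * A in
  0 < r /\ 0 < 1 - A * (exp r - 1) / r /\ exp r / (1 - A * (exp r - 1) / r) <= exp c.
Proof.
  intros Hc HA HAc r.
  set (x := exp c / c * A).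
  assert (Hec : exp c * exp (- c) = 1) by (rewrite <- exp_plus; replace (c + - c) with 0 by ring; apply exp_0).
  assert (HeC := exp_pos c). assert (HeM := exp_pos (- c)).
  assert (Hx0 : 0 < x) by (unfold x; apply Rmult_lt_0_compat; [apply Rdiv_lt_0_compat|]; lra).
  assert (HxA : A = x * c * exp (- c)).
  { unfold x. transitivity (A * (exp c * exp (- c))). rewrite Hec; ring. field. lra. }
  assert (Hxc : x < c).
  { unfold x. apply Rmult_lt_reg_l with (c * exp (- c)). nra.
    replace (c * exp (- c) * (exp c / c * A)) with (A * (exp c * exp (- c))) by (field; lra).
    rewrite Hec. nra. }
  assert (Hr : r = c - x) by reflexivity.
  assert (Hr0 : 0 < r) by lra.
  set (E := exp (- x)).
  assert (HE : 0 < E) by apply exp_pos.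
  assert (Her : exp r = exp c * E) by (rewrite Hr; unfold E; rewrite <- exp_plus; f_equal; ring).
  assert (HH := Hf_nonneg c x Hc ltac:(lra)). unfold Hf in HH. fold E in HH.
  set (F := exp (- c)) in *.
  assert (Hkey : x * c * (E - F) <= (c - x) * (1 - E)) by nra.
  assert (Hmain : exp r <= exp c * (1 - A * (exp r - 1) / r)).
  { rewrite Her, HxA. rewrite Hr.
    apply Rmult_le_reg_r with ((c - x) * F). apply Rmult_lt_0_compat; [lra| unfold F; apply exp_pos].
    replace (exp c * E * ((c - x) * F)) with (E * (c - x) * (exp c * F)) by ring.
    replace (exp c * (1 - x * c * F * (exp c * E - 1) / (c - x)) * ((c - x) * F))
      with ((exp c * F) * ((c - x) - x * c * (F * exp c * E - F))) by (field; lra).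
    unfold F in *. rewrite Hec. replace (exp (- c) * exp c) with 1 by (rewrite Rmult_comm; auto).
    nra. }
  assert (HD : 0 < 1 - A * (exp r - 1) / r).
  { assert (0 < exp r) by apply exp_pos.
    apply Rmult_lt_reg_l with (exp c). auto. lra. }
  split; [auto| split; [auto|]].
  apply Rmult_le_reg_r with (1 - A * (exp r - 1) / r). auto.
  unfold Rdiv at 1. rewrite Rmult_assoc, Rinv_l by lra. lra.
Qed.

Lemma shift_int (g : R -> R) t : (forall x, continuous g x) ->
  RInt (fun x => g (t + x)) 0 1 = RInt g t (t + 1).
Proof.
  intros Hg.
  assert (H := RInt_comp_lin (V:=R_CompleteNormedModule) g 1 t 0 1 (cont_everywhere_RInt g Hg _ _)).
  replace (1 * 0 + t) with t in H by ring. replace (1 * 1 + t) with (t + 1) in H by ring.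
  rewrite <- H. apply RInt_ext'. intros x _. unfold scal; simpl; unfold mult; simpl.
  rewrite Rmult_1_l. f_equal. ring.
Qed.

Lemma exp_half_sq a : exp (a / 2) ^ 2 = exp a.
Proof. simpl. rewrite Rmult_1_r, <- exp_plus. f_equal. field. Qed.

Theorem theorem2 (B c : R) (beta k khat : R -> R) (betabar eps : R) :
  0 < B -> 0 < c ->
  lipschitz_on01 beta ->
  is_supnorm01 beta betabar ->
  betabar <= B ->
  is_backstepping_kernel beta k ->
  (forall x, 0 <= x <= 1 -> continuous khat x) ->
  0 < eps -> eps < c * exp (- c / 2) / (1 + B) ->
  (forall x, 0 <= x <= 1 -> Rabs (k x - khat x) < eps) ->
  let cstar := c - exp c / c * eps ^ 2 * (1 + B) ^ 2 in
  let M := (1 + (betabar + (1 + betabar) * eps) * exp ((1 + betabar) * eps))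
           * (1 + betabar * exp betabar) * exp (c / 2) in
  0 < cstar /\
  forall u : R -> R -> R,
    is_closed_loop_solution beta khat u ->
    forall t, 0 <= t ->
      L2norm (fun x => u x t) <= M * exp (- cstar * t / 2) * L2norm (fun x => u x 0).
Proof.
  intros HB Hc Hlip Hsup HbB Hker Hkh He0 He1 Hdk cstar M.
  destruct Hsup as [Hsup1 _].
  assert (Hbb0 : 0 <= betabar) by (specialize (Hsup1 0 ltac:(lra)); pose proof (Rabs_pos (beta 0)); lra).
  set (A := eps ^ 2 * (1 + B) ^ 2).
  assert (HA0 : 0 < A) by (unfold A; apply Rmult_lt_0_compat; apply pow_lt; lra).
  assert (HAc : A < c ^ 2 * exp (- c)).
  { assert (H1 : eps * (1 + B) < c * exp (- c / 2)).
    { apply Rmult_lt_reg_r with (/ (1 + B)). apply Rinv_0_lt_compat; lra.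
      rewrite Rmult_assoc, Rinv_r by lra. rewrite Rmult_1_r. exact He1. }
    assert (H2 : (eps * (1 + B)) ^ 2 < (c * exp (- c / 2)) ^ 2).
    { assert (0 <= eps * (1 + B)) by (apply Rmult_le_pos; lra). simpl. nra. }
    unfold A. rewrite <- Rpow_mult_distr. eapply Rlt_le_trans. exact H2.
    rewrite Rpow_mult_distr, exp_half_sq. right; reflexivity. }
  destruct (numeric c A Hc HA0 HAc) as [Hr [HD HP]].
  assert (Hcs : cstar = c - exp c / c * A) by (unfold cstar, A; ring).
  split. { rewrite Hcs. exact Hr. }
  intros u Hsol t Ht.
  rewrite Hcs. set (r := c - exp c / c * A) in *.
  set (be := fun x => beta (clamp01 x)).
  assert (Hbe : forall x, continuous be x) by (apply lip_clamp_cont; auto).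
  assert (Hbeq : forall x, 0 <= x <= 1 -> be x = beta x) by (intros; unfold be; rewrite clamp01_id; auto).
  assert (Hbeb : forall x, Rabs (be x) <= betabar) by (intros; apply Hsup1, clamp01_in).
  set (ke := fun x => k (clamp01 x)).
  assert (Hke : forall x, continuous ke x) by (apply cont_clamp_comp; apply Hker).
  assert (Hkeq : forall x, 0 <= x <= 1 -> ke x = k x) by (intros; unfold ke; rewrite clamp01_id; auto).
  assert (Hch := charac beta khat u be Hsol Hbe Hbeq).
  assert (Hbd := boundary beta k khat u be ke Hsol Hker Hkh Hbe Hbeq Hke Hkeq).
  destruct Hsol as [Hcu [Hpde Hbc]].
  set (ae := fun s => u 0 (Rmax 0 s)).
  assert (Hae : forall x, continuous ae x) by (intros; apply ae_cont; auto).
  set (fa := fun t s => ae (t + s)).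
  assert (Hfa : forall t x, continuous (fa t) x).
  { intros t0 x. unfold fa. eapply cont_ext; [|exact (cont_shift ae t0 1 x Hae)]. intros; simpl; f_equal; ring. }
  set (y := fun s => ae s ^ 2).
  assert (Hy : forall x, continuous y x) by (intros; apply cont_sq'; auto).
  assert (Hy0 : forall x, 0 <= y x) by (intros; apply pow2_ge_0).
  assert (Hrep : forall t, 0 <= t -> RInt (fun x => u x t ^ 2) 0 1 =
      RInt (fun x => (fa t x - RInt (fun r => be (x - r) * fa t r) 0 x) ^ 2) 0 1).
  { intros t0 Ht0. apply RInt_ext'. rewrite Rmin_left, Rmax_right by lra. intros x Hx.
    rewrite (Hch x t0) by lra. unfold fa, ae. rewrite (Rmax_right 0 (t0 + x)) by lra. reflexivity. }
  assert (Hzt : forall t, RInt (fun x => fa t x ^ 2) 0 1 = RInt y t (t + 1)).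
  { intros t0. unfold fa. apply (shift_int y t0 Hy). }
  assert (Hup : forall t, 0 <= t -> RInt (fun x => u x t ^ 2) 0 1 <= (1 + betabar) ^ 2 * RInt y t (t + 1)).
  { intros t0 Ht0. rewrite Hrep by auto. rewrite <- Hzt. apply L2_conv_bound; auto. }
  assert (Hdel : forall t, 0 <= t -> y (t + 1) <= A * RInt y t (t + 1)).
  { intros t0 Ht0. unfold y, ae. rewrite (Rmax_right 0 (t0 + 1)) by lra.
    rewrite (Hbd t0 Ht0).
    eapply Rle_trans. apply (bd_bound (fun x => khat x - k x) (fun y => u y t0) eps).
    - intros x Hx. apply cont_mult'.
      + apply (continuous_comp (fun y => 1 - y) (fun x => khat x - k x)).
        apply (cont_ext (fun s => 1 + (-1) * s)). intros; ring. apply cont_aff.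
        apply cont_minus'. apply Hkh; lra. apply Hker; lra.
      + apply (continuous_comp_2 (fun y => y) (fun _ => t0) u). apply continuous_id. apply continuous_const.
        apply Hcu; lra.
    - intros x Hx. apply (continuous_comp_2 (fun y => y) (fun _ => t0) u). apply continuous_id. apply continuous_const.
      apply Hcu; lra.
    - intros x Hx. left. rewrite Rabs_minus_sym. apply Hdk; auto.
    - assert (Hz0 : 0 <= RInt y t0 (t0 + 1)).
      { apply RInt_ge_0. lra. apply cont_everywhere_RInt; auto. intros; auto. }
      specialize (Hup t0 Ht0).
      assert (Hb2 : (1 + betabar) ^ 2 <= (1 + B) ^ 2) by (apply pow_incr; lra).
      assert (He2 : 0 <= eps ^ 2) by (apply pow2_ge_0).
      unfold A. 
      apply Rle_trans with (eps ^ 2 * ((1 + betabar) ^ 2 * RInt y t0 (t0 + 1))).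
      apply Rmult_le_compat_l; auto.
      rewrite Rmult_assoc. apply Rmult_le_compat_l; auto. apply Rmult_le_compat_r; auto. }
  assert (Hdec := delay_decay y A r Hy Hy0 (Rlt_le _ _ HA0) Hr HD Hdel t Ht).
  assert (Hinit : RInt y 0 1 <= (1 + betabar * exp betabar) ^ 2 * RInt (fun x => u x 0 ^ 2) 0 1).
  { rewrite (Hrep 0) by lra.
    assert (Hz0 := Hzt 0). replace (0 + 1) with 1 in Hz0 by ring. rewrite <- Hz0.
    apply L2_inv_bound; auto. }
  set (I0 := RInt (fun x => u x 0 ^ 2) 0 1) in *.
  set (It := RInt (fun x => u x t ^ 2) 0 1).
  set (z0 := RInt y 0 1) in *.
  set (zt := RInt y t (t + 1)) in *.
  set (K := betabar * exp betabar) in *.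
  assert (HK0 : 0 <= K) by (unfold K; apply Rmult_le_pos; auto; left; apply exp_pos).
  assert (HI0 : 0 <= I0).
  { apply RInt_ge_0. lra. apply (ex_RInt_continuous (V:=R_CompleteNormedModule)).
    rewrite Rmin_left, Rmax_right by lra. intros x Hx. apply cont_sq'.
    apply (continuous_comp_2 (fun y => y) (fun _ => 0) u). apply continuous_id. apply continuous_const.
    apply Hcu; lra. intros; apply pow2_ge_0. }
  assert (HIt : 0 <= It).
  { apply RInt_ge_0. lra. apply (ex_RInt_continuous (V:=R_CompleteNormedModule)).
    rewrite Rmin_left, Rmax_right by lra. intros x Hx. apply cont_sq'.
    apply (continuous_comp_2 (fun y => y) (fun _ => t) u). apply continuous_id. apply continuous_const.
    apply Hcu; lra. intros; apply pow2_ge_0. }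
  assert (Hz0 : 0 <= z0) by (apply RInt_ge_0; [lra| apply cont_everywhere_RInt; auto| intros; auto]).
  assert (Hert := exp_pos (- r * t)).
  assert (HeC := exp_pos c).
  assert (Hm1 : 1 + betabar <= 1 + (betabar + (1 + betabar) * eps) * exp ((1 + betabar) * eps)).
  { assert (1 <= exp ((1 + betabar) * eps)).
    { assert (Hq := exp_mono 0 ((1 + betabar) * eps) ltac:(apply Rmult_le_pos; lra)). rewrite exp_0 in Hq. exact Hq. }
    assert (0 <= (1 + betabar) * eps) by (apply Rmult_le_pos; lra).
    nra. }
  assert (HMl : (1 + betabar) * (1 + K) * exp (c / 2) <= M).
  { unfold M. fold K. apply Rmult_le_compat_r. left; apply exp_pos.
    apply Rmult_le_compat_r; lra. }
  assert (HM0 : 0 <= (1 + betabar) * (1 + K) * exp (c / 2)).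
  { apply Rmult_le_pos. apply Rmult_le_pos; lra. left; apply exp_pos. }
  assert (HM2 : ((1 + betabar) * (1 + K)) ^ 2 * exp c <= M ^ 2).
  { rewrite <- (exp_half_sq c). rewrite <- Rpow_mult_distr. apply pow_incr. lra. }
  assert (C1 : zt <= exp c * exp (- r * t) * z0).
  { eapply Rle_trans. exact Hdec. apply Rmult_le_compat_r; auto. apply Rmult_le_compat_r; lra. }
  assert (C2 : It <= ((1 + betabar) * (1 + K)) ^ 2 * exp c * exp (- r * t) * I0).
  { eapply Rle_trans. apply (Hup t Ht). fold zt.
    assert (Hb2 : 0 <= (1 + betabar) ^ 2) by apply pow2_ge_0.
    apply Rle_trans with ((1 + betabar) ^ 2 * (exp c * exp (- r * t) * z0)).
    apply Rmult_le_compat_l; auto.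
    apply Rle_trans with ((1 + betabar) ^ 2 * (exp c * exp (- r * t) * ((1 + K) ^ 2 * I0))).
    apply Rmult_le_compat_l; auto. apply Rmult_le_compat_l. left; apply Rmult_lt_0_compat; auto. auto.
    right. rewrite Rpow_mult_distr. ring. }
  assert (C3 : It <= M ^ 2 * exp (- r * t) * I0).
  { eapply Rle_trans. exact C2. apply Rmult_le_compat_r; auto. apply Rmult_le_compat_r; lra. }
  unfold L2norm. fold It. fold I0.
  assert (HQ : 0 <= M * exp (- r * t / 2) * sqrt I0).
  { apply Rmult_le_pos. apply Rmult_le_pos. lra. left; apply exp_pos. apply sqrt_pos. }
  rewrite <- (sqrt_pow2 _ HQ). apply sqrt_le_1_alt.
  rewrite !Rpow_mult_distr, exp_half_sq, pow2_sqrt by auto. exact C3.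
Qed.
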